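(* In the Baxter monoid ${\mathsf{baxt}}$, the relation $\sim_o$ coincides with $\equiv_{\mathrm{ev}}$: for $s,t\in{\mathsf{baxt}}$, there exist $g,h\in{\mathsf{baxt}}$ with $sg=gt$ and $hs=th$ if and only if $s$ and $t$ have the same evaluation.
   Context: Let $\mathcal{A}=\{1<2<3<\cdots\}$ be the ordered alphabet of positive integers. For a monoid $M$ and $x,y\in M$, write $x\sim_o y$ iff there exist $g,h\in M$ with $xg=gy$ and $hx=yh$. The evaluation of a word $w$ is the tuple $(|w|_a)_{a}$ giving the number of occurrences of each letter $a$; the monoid below is defined by evaluation-preserving relations, so the evaluation of an element is well defined, and $s\equiv_{\mathrm{ev}} t$ means $s$ and $t$ have the same evaluation. The Baxter monoid ${\mathsf{baxt}}$ is $\mathcal{A}^*$ modulo the congruence generated by the relations $cudavb=cuadvb$ for letters $a\le b<c\le d$ and words $u,v\in\mathcal{A}^*$, and $budavc=buadvc$ for letters $a<b\le c<d$ and words $u,v\in\mathcal{A}^*$. (A known fact that may be used: if $p,q\in\mathcal{A}^*$ have the same evaluation then $ppq=pqq$ and $qpp=qqp$ in ${\mathsf{baxt}}$.) *)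

(* Defs.v *)
From mathcomp Require Import all_boot.
From Stdlib Require Import Relations.
Set Implicit Arguments. Unset Strict Implicit. Unset Printing Implicit Defensive.

Definition word := seq nat.
Definition is_word (w : word) : bool := all (fun a => 0 < a) w.

Inductive baxt_rel : word -> word -> Prop :=
| baxt_rel1 (a b c d : nat) (u v : word) :
    a <= b -> b < c -> c <= d ->
    baxt_rel ([:: c] ++ u ++ [:: d; a] ++ v ++ [:: b])
             ([:: c] ++ u ++ [:: a; d] ++ v ++ [:: b])
| baxt_rel2 (a b c d : nat) (u v : word) :
    a < b -> b <= c -> c < d ->
    baxt_rel ([:: b] ++ u ++ [:: d; a] ++ v ++ [:: c])
             ([:: b] ++ u ++ [:: a; d] ++ v ++ [:: c]).

Inductive baxt_step : word -> word -> Prop :=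
| baxt_step_ctx (p q x y : word) :
    baxt_rel x y -> baxt_step (p ++ x ++ q) (p ++ y ++ q).

Definition baxt_eq : word -> word -> Prop := clos_refl_sym_trans word baxt_step.

Definition baxt_sim_o (x y : word) : Prop :=
  (exists g, is_word g /\ baxt_eq (x ++ g) (g ++ y)) /\
  (exists h, is_word h /\ baxt_eq (h ++ x) (y ++ h)).

Definition same_ev (x y : word) : Prop := forall a : nat, count_mem a x = count_mem a y.

(* Main.v *)
Require Import Defs.
From Stdlib Require Import Relations Lia.
From mathcomp Require Import all_boot.

Lemma beq_refl w : baxt_eq w w.
Proof. exact: rst_refl. Qed.
Lemma beq_sym w1 w2 : baxt_eq w1 w2 -> baxt_eq w2 w1.
Proof. exact: rst_sym. Qed.
Lemma beq_trans w1 w2 w3 : baxt_eq w1 w2 -> baxt_eq w2 w3 -> baxt_eq w1 w3.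
Proof. exact: rst_trans. Qed.

Lemma swap_big (L R : word) (x y : nat) : y < x -> x \in L -> y \in R ->
  baxt_eq (L ++ x :: y :: R) (L ++ y :: x :: R).
Proof.
move=> yx /splitPr[L1 L2] /splitPr[R1 R2].
apply: rst_step.
have E : forall z1 z2, (L1 ++ x :: L2) ++ z1 :: z2 :: (R1 ++ y :: R2)
   = L1 ++ ([:: x] ++ L2 ++ [:: z1; z2] ++ R1 ++ [:: y]) ++ R2.
  by move=> z1 z2; rewrite -!catA /=.
rewrite !E; constructor; apply: baxt_rel1 => //.
Qed.

Lemma swap (L R : word) (x y : nat) : x \in L -> y \in L -> x \in R -> y \in R ->
  baxt_eq (L ++ x :: y :: R) (L ++ y :: x :: R).
Proof.
move=> xL yL xR yR.
case: (ltngtP x y) => h.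
- by apply: beq_sym; apply: swap_big.
- by apply: swap_big.
- by rewrite h; apply: beq_refl.
Qed.

Lemma move_left (W : word) (L R : word) (x : nat) :
  {subset x :: W <= L} -> {subset x :: W <= R} ->
  baxt_eq (L ++ W ++ x :: R) (L ++ x :: W ++ R).
Proof.
elim: W L => [|w W IH] L sL sR /=; first exact: beq_refl.
apply: beq_trans (_ : baxt_eq _ ((L ++ [:: w]) ++ x :: W ++ R)) _.
  have := IH (L ++ [:: w]).
  rewrite -!catA /=; apply.
  - move=> z; rewrite !inE => /orP[] H; rewrite mem_cat sL //= !inE H ?orbT //.
  - move=> z; rewrite !inE => /orP[] H; apply: sR; rewrite !inE H ?orbT //.
rewrite -catA /=.
apply: swap.
- by apply: sL; rewrite !inE eqxx orbT.
- by apply: sL; rewrite !inE eqxx.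
- by rewrite mem_cat sR ?orbT // !inE eqxx orbT.
- by rewrite mem_cat sR ?orbT // !inE eqxx.
Qed.

Lemma perm_beq (M M' L R : word) : perm_eq M M' ->
  {subset M <= L} -> {subset M <= R} -> baxt_eq (L ++ M ++ R) (L ++ M' ++ R).
Proof.
elim: M M' L => [|x M1 IH] M' L pM sL sR.
  by move: (perm_size pM); case: M' pM => // _ _; apply: beq_refl.
have xM' : x \in M' by rewrite -(perm_mem pM) inE eqxx.
case/splitPr: xM' pM => M'1 M'2 pM.
have sub1 : {subset M'1 <= x :: M1}.
  by move=> z zi; rewrite (perm_mem pM) mem_cat zi.
have p1 : perm_eq M1 (M'1 ++ M'2).
  rewrite -(perm_cons x); apply: (perm_trans pM).
  by rewrite -cat1s perm_catCA.
apply: beq_trans (_ : baxt_eq _ ((L ++ [:: x]) ++ (M'1 ++ M'2) ++ R)) _.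
  have := IH _ (L ++ [:: x]) p1.
  rewrite -!catA /=; apply.
  - by move=> z zi; rewrite mem_cat sL // inE zi orbT.
  - by move=> z zi; rewrite sR // inE zi orbT.
rewrite -!catA /= catA.
apply: beq_sym.
have := @move_left M'1 L (M'2 ++ R) x.
rewrite -!catA /=; apply.
- move=> z; rewrite inE; case/orP => [/eqP->|zi]; first by rewrite sL // inE eqxx.
  by apply: sL; apply: sub1.
- move=> z; rewrite inE; case/orP => [/eqP->|zi]; first by rewrite mem_cat sR ?orbT // inE eqxx.
  by rewrite mem_cat sR ?orbT // sub1.
Qed.

Lemma beq_count w1 w2 a : baxt_eq w1 w2 -> count_mem a w1 = count_mem a w2.
Proof.
move=> H; induction H as [x y [p q x' y' r]| x | x y _ IH | x y z _ IH1 _ IH2].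
- rewrite !count_cat; congr (_ + (_ + _)).
  case: r => *; rewrite /= ?count_cat /=; congr (_ + (_ + _)); exact: addnCA.
- by [].
- by rewrite IH.
- by rewrite IH1 IH2.
Qed.

Theorem mainTheorem10 (s t : seq nat) :
  is_word s -> is_word t -> (baxt_sim_o s t <-> same_ev s t).
Proof.
move=> ws wt; split.
  case=> [[g [_ H]] _] a; have := @beq_count _ _ a H.
  by rewrite !count_cat addnC => /addnI.
move=> ev.
have pst : perm_eq s t.
  by apply/allP => z _; rewrite /= ev eqxx.
split.
- exists (s ++ t); split; first by rewrite /is_word all_cat; apply/andP.
  rewrite -catA; apply: perm_beq => //.
  by move=> z; rewrite (perm_mem pst).
- exists (t ++ s); split; first by rewrite /is_word all_cat; apply/andP.
  rewrite -catA.
  have -> : t ++ t ++ s = t ++ t ++ s ++ [::] by rewrite cats0.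
  have -> : t ++ s ++ s = t ++ s ++ s ++ [::] by rewrite cats0.
  apply: beq_sym; apply: perm_beq => //.
  by rewrite perm_sym.
  by move=> z; rewrite cats0 (perm_mem pst).
Qed.
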